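(* For every context $\Gamma$, variables $x,y$ and terms $A,M,B$: if $y\notin\mathrm{dom}\,\Gamma$ and $\Gamma,x:A\vdash M:B$, then $\Gamma,y:A\vdash M[x:=v\,y]:B[x:=v\,y]$.
   Context: Let $\mathcal V$ (the variables) be a type with decidable equality, equipped with functions $\mathrm{encode}:\mathcal V\to\mathbb N$ and $\mathrm{decode}:\mathbb N\to\mathcal V$ such that $\mathrm{encode}(\mathrm{decode}\,n)=n$ for all $n$. Let $\mathcal C$ (the constants) be any type. Terms $\Lambda$ are generated by: $c\,k$ ($k\in\mathcal C$), $v\,x$ ($x\in\mathcal V$), $\lambda[x:A]M$, $\Pi[x:A]B$ and $M\cdot N$; in $\lambda[x:A]M$ and $\Pi[x:A]B$ the name $x$ binds in $M$ (resp. $B$) but not in $A$. Terms are raw first-order syntax (not identified up to renaming of bound variables) and $\equiv$ denotes syntactic identity. The list of free variables is $\mathrm{fv}(c\,k)=[\,]$, $\mathrm{fv}(v\,x)=[x]$, $\mathrm{fv}(\lambda[x:A]M)=\mathrm{fv}\,A\mathbin{+\!\!+}(\mathrm{fv}\,M-x)$, $\mathrm{fv}(\Pi[x:A]B)=\mathrm{fv}\,A\mathbin{+\!\!+}(\mathrm{fv}\,B-x)$, $\mathrm{fv}(M\cdot N)=\mathrm{fv}\,M\mathbin{+\!\!+}\mathrm{fv}\,N$, where $\mathbin{+\!\!+}$ is list concatenation and $xs-x$ deletes every occurrence of $x$ from $xs$. Fix a function $\chi':\mathrm{List}\,\mathbb N\to\mathbb N$ with $\chi'(ns)\notin ns$ for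 every list $ns$, and put $X'(xs)=\mathrm{decode}(\chi'(\mathrm{map}\ \mathrm{encode}\ xs))$. A substitution is any function $\sigma:\mathcal V\to\Lambda$; $\iota=v$ is the identity substitution; $(\sigma,x:=N)(y)=N$ if $y=x$ and $\sigma\,y$ otherwise. For a substitution $\sigma$ and a list $xs$ of variables, $X(\sigma,xs)=X'(\text{concatenation of the lists }\mathrm{fv}(\sigma\,y)\text{ for }y\in xs)$. The action $M\bullet\sigma$ is defined by structural recursion: $c\,k\bullet\sigma=c\,k$; $v\,x\bullet\sigma=\sigma\,x$; $(M\cdot N)\bullet\sigma=(M\bullet\sigma)\cdot(N\bullet\sigma)$; $(\lambda[x:A]M)\bullet\sigma=\lambda[y:A\bullet\sigma](M\bullet(\sigma,x:=v\,y))$ with $y=X(\sigma,\mathrm{fv}\,M-x)$; $(\Pi[x:A]B)\bullet\sigma=\Pi[y:A\bullet\sigma](B\bullet(\sigma,x:=v\,y))$ with $y=X(\sigma,\mathrm{fv}\,B-x)$. Unary substitution is $M[x:=N]=M\bullet(\iota,x:=N)$. $\alpha$-conversion $\sim_\alpha$ is the inductively defined relation with rules: $c\,k\sim_\alpha c\,k$; $v\,x\sim_\alpha v\,x$; $M\cdot N\sim_\alpha M'\cdot N'$ if $M\sim_\alpha M'$ and $N\sim_\alpha N'$; $\lambda[x:A]M\sim_\alpha\lambda[x':A']M'$ if $A\sim_\alpha A'$ and there is a variable $y$ with $y\notin\mathrm{fv}\,M-x$, $y\notin\mathrm{fv}\,M'-x'$ and $M[x:=v\,y]\equiv M'[x':=v\,y]$;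 and the same rule with $\Pi$ in place of $\lambda$. $\beta$-contraction is $(\lambda[x:A]M)\cdot N\ \triangleright_\beta\ M[x:=N]$. One-step $\beta$-reduction $\to_\beta$ is its contextual closure, inductively: $M\to_\beta N$ if $M\triangleright_\beta N$; $\lambda[x:A]M\to_\beta\lambda[x:A]M'$ and $\Pi[x:A]M\to_\beta\Pi[x:A]M'$ if $M\to_\beta M'$; $\lambda[x:A]M\to_\beta\lambda[x:A']M$ and $\Pi[x:A]M\to_\beta\Pi[x:A']M$ if $A\to_\beta A'$; $M\cdot P\to_\beta N\cdot P$ and $P\cdot M\to_\beta P\cdot N$ if $M\to_\beta N$. $\beta$-conversion $\simeq_\beta$ is the equivalence (reflexive–symmetric–transitive) closure of $\sim_\alpha\cup\to_\beta$. Pure Type System: fix a binary relation $\mathcal A\subseteq\mathcal C\times\mathcal C$ (axioms) and a ternary relation $\mathcal R\subseteq\mathcal C\times\mathcal C\times\mathcal C$ (rules). A context is a finite list of pairs $(x,A)$ with $x\in\mathcal V$, $A\in\Lambda$; $\Gamma,x:A$ denotes the list $(x,A)::\Gamma$; $\mathrm{dom}\,\Gamma$ is the list of first components; $(x,A)\in\Gamma$ is list membership. The judgments $\Gamma\ \mathrm{ok}$ and $\Gamma\vdash M:A$ are defined mutually inductively by: (nil) $[\,]\ \mathrm{ok}$; (cons) if $\Gamma\ \mathrm{ok}$, $\Gamma\vdash A:c\,s$ and $x\notin\mathrm{dom}\,\Gamma$ then $\Gamma,x:A\ \mathrm{ok}$; (sort) if $\Gamma\ \mathrm{ok}$ and $\mathcal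 A\,s_1\,s_2$ then $\Gamma\vdash c\,s_1:c\,s_2$; (var) if $\Gamma\ \mathrm{ok}$ and $(x,A)\in\Gamma$ then $\Gamma\vdash v\,x:A$; (prod) if $\mathcal R\,s_1\,s_2\,s_3$, $\Gamma\vdash A:c\,s_1$ and for every $y\notin\mathrm{dom}\,\Gamma$, $\Gamma,y:A\vdash B[x:=v\,y]:c\,s_2$, then $\Gamma\vdash\Pi[x:A]B:c\,s_3$; (abs) if $\mathcal R\,s_1\,s_2\,s_3$, $\Gamma\vdash A:c\,s_1$, for every $z\notin\mathrm{dom}\,\Gamma$, $\Gamma,z:A\vdash B[y:=v\,z]:c\,s_2$, and for every $z\notin\mathrm{dom}\,\Gamma$, $\Gamma,z:A\vdash M[x:=v\,z]:B[y:=v\,z]$, then $\Gamma\vdash\lambda[x:A]M:\Pi[y:A]B$; (app) if $\Gamma\vdash M:\Pi[x:A]B$, $\Gamma\vdash N:A$ and $\Gamma\vdash B[x:=N]:c\,s$ for some $s$, then $\Gamma\vdash M\cdot N:B[x:=N]$; (conv) if $\Gamma\vdash M:A$, $A\simeq_\beta B$ and $\Gamma\vdash B:c\,s$ for some $s$, then $\Gamma\vdash M:B$. (The premises quantified over all fresh names in (prod) and (abs) are infinitely branching.) *)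

(* Defs.v *)
From Stdlib Require Import List Relations.
Import ListNotations.
Set Implicit Arguments.

Record VarType := {
  vT :> Type;
  veq_dec : forall x y : vT, {x = y} + {x <> y};
  encode : vT -> nat;
  decode : nat -> vT;
  encode_decode : forall n, encode (decode n) = n;
  chi' : list nat -> nat;
  chi'_fresh : forall ns, ~ In (chi' ns) ns
}.

Inductive term (V : VarType) (C : Type) : Type :=
| tc : C -> term V C
| tv : V -> term V C
| tlam : V -> term V C -> term V C -> term V C   (* lambda [x : A] M *)
| tpi : V -> term V C -> term V C -> term V C    (* Pi [x : A] B *)
| tapp : term V C -> term V C -> term V C.
Arguments tc {V C} _.
Arguments tv {V C} _.
Arguments tlam {V C} _ _ _.
Arguments tpi {V C} _ _ _.
Arguments tapp {V C} _ _.

Section Syntax.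
Variable V : VarType.
Variable C : Type.

Definition remove_var (xs : list V) (x : V) : list V :=
  filter (fun y => if veq_dec V y x then false else true) xs.

Fixpoint fv (M : term V C) : list V :=
  match M with
  | tc _ => []
  | tv x => [x]
  | tlam x A M => fv A ++ remove_var (fv M) x
  | tpi x A B => fv A ++ remove_var (fv B) x
  | tapp M N => fv M ++ fv N
  end.

Definition X' (xs : list V) : V := decode V (chi' V (map (encode V) xs)).

Definition X (sigma : V -> term V C) (xs : list V) : V :=
  X' (flat_map (fun y => fv (sigma y)) xs).

Definition upd (sigma : V -> term V C) (x : V) (N : term V C) : V -> term V C :=
  fun y => if veq_dec V y x then N else sigma y.

Fixpoint act (M : term V C) (sigma : V -> term V C) : term V C :=
  match M with
  | tc k => tc k
  | tv x => sigma x
  | tapp M N => tapp (act M sigma) (act N sigma)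
  | tlam x A M =>
      let y := X sigma (remove_var (fv M) x) in
      tlam y (act A sigma) (act M (upd sigma x (tv y)))
  | tpi x A B =>
      let y := X sigma (remove_var (fv B) x) in
      tpi y (act A sigma) (act B (upd sigma x (tv y)))
  end.

Definition iota : V -> term V C := fun x => tv x.

Definition subst1 (M : term V C) (x : V) (N : term V C) : term V C :=
  act M (upd iota x N).

Inductive alpha : term V C -> term V C -> Prop :=
| alpha_c : forall k, alpha (tc k) (tc k)
| alpha_v : forall x, alpha (tv x) (tv x)
| alpha_app : forall M N M' N', alpha M M' -> alpha N N' ->
    alpha (tapp M N) (tapp M' N')
| alpha_lam : forall x A M x' A' M' y, alpha A A' ->
    ~ In y (remove_var (fv M) x) -> ~ In y (remove_var (fv M') x') ->
    subst1 M x (tv y) = subst1 M' x' (tv y) ->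
    alpha (tlam x A M) (tlam x' A' M')
| alpha_pi : forall x A M x' A' M' y, alpha A A' ->
    ~ In y (remove_var (fv M) x) -> ~ In y (remove_var (fv M') x') ->
    subst1 M x (tv y) = subst1 M' x' (tv y) ->
    alpha (tpi x A M) (tpi x' A' M').

Inductive beta_contr : term V C -> term V C -> Prop :=
| beta_c : forall x A M N, beta_contr (tapp (tlam x A M) N) (subst1 M x N).

Inductive beta_step : term V C -> term V C -> Prop :=
| bs_contr : forall M N, beta_contr M N -> beta_step M N
| bs_lam_body : forall x A M M', beta_step M M' -> beta_step (tlam x A M) (tlam x A M')
| bs_pi_body : forall x A M M', beta_step M M' -> beta_step (tpi x A M) (tpi x A M')
| bs_lam_dom : forall x A A' M, beta_step A A' -> beta_step (tlam x A M) (tlam x A' M)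
| bs_pi_dom : forall x A A' M, beta_step A A' -> beta_step (tpi x A M) (tpi x A' M)
| bs_appl : forall M N P, beta_step M N -> beta_step (tapp M P) (tapp N P)
| bs_appr : forall M N P, beta_step M N -> beta_step (tapp P M) (tapp P N).

Definition beta_conv : term V C -> term V C -> Prop :=
  clos_refl_sym_trans (term V C) (fun M N => alpha M N \/ beta_step M N).

Definition context := list (V * term V C).
Definition dom (G : context) : list V := map fst G.

Variable Ax : C -> C -> Prop.
Variable Rl : C -> C -> C -> Prop.

Inductive wf : context -> Prop :=
| wf_nil : wf []
| wf_cons : forall G x A s, wf G -> typing G A (tc s) -> ~ In x (dom G) ->
    wf ((x, A) :: G)
with typing : context -> term V C -> term V C -> Prop :=
| ty_sort : forall G s1 s2, wf G -> Ax s1 s2 -> typing G (tc s1) (tc s2)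
| ty_var : forall G x A, wf G -> In (x, A) G -> typing G (tv x) A
| ty_prod : forall G x A B s1 s2 s3, Rl s1 s2 s3 -> typing G A (tc s1) ->
    (forall y, ~ In y (dom G) -> typing ((y, A) :: G) (subst1 B x (tv y)) (tc s2)) ->
    typing G (tpi x A B) (tc s3)
| ty_abs : forall G x y A M B s1 s2 s3, Rl s1 s2 s3 -> typing G A (tc s1) ->
    (forall z, ~ In z (dom G) -> typing ((z, A) :: G) (subst1 B y (tv z)) (tc s2)) ->
    (forall z, ~ In z (dom G) ->
       typing ((z, A) :: G) (subst1 M x (tv z)) (subst1 B y (tv z))) ->
    typing G (tlam x A M) (tpi y A B)
| ty_app : forall G M N x A B s, typing G M (tpi x A B) -> typing G N A ->
    typing G (subst1 B x N) (tc s) -> typing G (tapp M N) (subst1 B x N)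
| ty_conv : forall G M A B s, typing G M A -> beta_conv A B -> typing G B (tc s) ->
    typing G M B.

End Syntax.

(* Main.v *)
Require Import Defs.
From Stdlib Require Import List.
From Stdlib Require Import Relations.
Import ListNotations.

Section S.
Variable V : VarType.
Variable C : Type.
Notation tm := (term V C).
Notation io := (iota V C).
Notation rem := (remove_var V).

Lemma in_rem : forall (a x : V) l, In a (rem l x) <-> In a l /\ a <> x.
Proof.
  intros a x l. unfold remove_var. rewrite filter_In.
  destruct (veq_dec V a x); split; intros [H1 H2]; try discriminate; auto; try contradiction.
Qed.

Lemma rem_app : forall (l1 l2 : list V) x, rem (l1 ++ l2) x = rem l1 x ++ rem l2 x.
Proof. intros; unfold remove_var; apply filter_app. Qed.

Lemma rem_notin : forall (l : list V) y, ~ In y l -> rem l y = l.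
Proof.
  induction l; intros y H; simpl; auto.
  unfold remove_var in *; simpl.
  destruct (veq_dec V a y). subst; exfalso; apply H; left; auto.
  f_equal. apply IHl. intro; apply H; right; auto.
Qed.

Lemma X'_fresh : forall l, ~ In (X' V l) l.
Proof.
  intros l H. unfold X' in H. apply (chi'_fresh V (map (encode V) l)).
  rewrite <- (encode_decode V (chi' V (map (encode V) l))).
  apply in_map; auto.
Qed.

Definition fvs (s : V -> tm) (l : list V) := flat_map (fun w => fv (s w)) l.

Lemma X_fresh : forall (s : V -> tm) l, ~ In (X s l) (fvs s l).
Proof. intros; apply X'_fresh. Qed.

Lemma fvs_app : forall s l1 l2, fvs s (l1 ++ l2) = fvs s l1 ++ fvs s l2.
Proof. intros; unfold fvs; apply flat_map_app. Qed.

Lemma in_fvs : forall s l a, In a (fvs s l) <-> exists w, In w l /\ In a (fv (s w)).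
Proof. intros; unfold fvs; rewrite in_flat_map; firstorder. Qed.

Lemma fvs_ext : forall s t l, (forall w, In w l -> s w = t w) -> fvs s l = fvs t l.
Proof.
  induction l; intros H; simpl; auto. unfold fvs in *; simpl.
  rewrite H by (left; auto). f_equal. apply IHl. intros; apply H; right; auto.
Qed.

Lemma act_ext : forall (M : tm) s t, (forall w, In w (fv M) -> s w = t w) -> act M s = act M t.
Proof.
  induction M; intros s t H; simpl in *.
  - auto.
  - apply H; auto.
  - assert (E : X s (rem (fv M2) v) = X t (rem (fv M2) v)).
    { unfold X. f_equal. apply fvs_ext. intros w Hw. apply H. apply in_or_app; right; auto. }
    rewrite E. f_equal.
    + apply IHM1. intros; apply H; apply in_or_app; left; auto.
    + apply IHM2. intros w Hw. unfold upd. destruct (veq_dec V w v); auto.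
      apply H. apply in_or_app; right. apply in_rem; auto.
  - assert (E : X s (rem (fv M2) v) = X t (rem (fv M2) v)).
    { unfold X. f_equal. apply fvs_ext. intros w Hw. apply H. apply in_or_app; right; auto. }
    rewrite E. f_equal.
    + apply IHM1. intros; apply H; apply in_or_app; left; auto.
    + apply IHM2. intros w Hw. unfold upd. destruct (veq_dec V w v); auto.
      apply H. apply in_or_app; right. apply in_rem; auto.
  - f_equal; [apply IHM1|apply IHM2]; intros; apply H; apply in_or_app; auto.
Qed.

Lemma rem_cons : forall (a x : V) l, rem (a :: l) x = if veq_dec V a x then rem l x else a :: rem l x.
Proof. intros; unfold remove_var; simpl; destruct (veq_dec V a x); auto. Qed.

Lemma rem_fvs_upd : forall (s : V -> tm) x y l,
  ~ In y (fvs s (rem l x)) ->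
  rem (fvs (upd s x (tv y)) l) y = fvs s (rem l x).
Proof.
  induction l; intros H; simpl; auto.
  rewrite rem_cons in *. unfold fvs in *. simpl. rewrite rem_app.
  unfold upd at 1.
  destruct (veq_dec V a x).
  - simpl. unfold remove_var at 1; simpl. destruct (veq_dec V y y); [|congruence]. simpl. fold (rem (flat_map (fun w : V => fv (upd s x (tv y) w)) l) y).
    apply IHl. exact H.
  - simpl in H. simpl. rewrite rem_notin.
    + f_equal. apply IHl. intro; apply H; apply in_or_app; right; auto.
    + intro; apply H; apply in_or_app; left; auto.
Qed.

Lemma fv_act : forall (M : tm) s, fv (act M s) = fvs s (fv M).
Proof.
  induction M; intros s; simpl; auto.
  - unfold fvs; simpl; rewrite app_nil_r; auto.
  - rewrite fvs_app. rewrite IHM1, IHM2. f_equal. apply rem_fvs_upd. apply X_fresh.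
  - rewrite fvs_app. rewrite IHM1, IHM2. f_equal. apply rem_fvs_upd. apply X_fresh.
  - rewrite fvs_app, IHM1, IHM2; auto.
Qed.

Lemma fvs_io : forall l, fvs io l = l.
Proof. induction l; simpl; auto. unfold fvs in *; simpl. f_equal; auto. Qed.

Lemma fvs_fvs : forall s t l, fvs t (fvs s l) = fvs (fun w => act (s w) t) l.
Proof.
  induction l; simpl; auto. unfold fvs in *; simpl.
  rewrite flat_map_app. rewrite fv_act. f_equal; auto.
Qed.

Lemma act_comp : forall (M : tm) s t, act (act M s) t = act M (fun w => act (s w) t).
Proof.
  induction M; intros s t; simpl; auto.
  -
    set (y := X s (rem (fv M2) v)).
    assert (Hy : ~ In y (fvs s (rem (fv M2) v))) by apply X_fresh.
    assert (E : X t (rem (fv (act M2 (upd s v (tv y)))) y) = X (fun w => act (s w) t) (rem (fv M2) v)).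
    { rewrite fv_act, rem_fvs_upd by auto. unfold X. f_equal. apply fvs_fvs. }
    rewrite E. f_equal; auto. rewrite IHM2. apply act_ext.
    intros w Hw. unfold upd at 1. destruct (veq_dec V w v).
    + subst. simpl. unfold upd. destruct (veq_dec V y y); [|congruence].
      destruct (veq_dec V v v); congruence.
    + unfold upd at 2. destruct (veq_dec V w v); [congruence|].
      apply act_ext. intros u Hu. unfold upd. destruct (veq_dec V u y); auto.
      subst. exfalso. apply Hy. apply in_fvs. exists w. split; auto. apply in_rem; auto.
  - set (y := X s (rem (fv M2) v)).
    assert (Hy : ~ In y (fvs s (rem (fv M2) v))) by apply X_fresh.
    assert (E : X t (rem (fv (act M2 (upd s v (tv y)))) y) = X (fun w => act (s w) t) (rem (fv M2) v)).
    { rewrite fv_act, rem_fvs_upd by auto. unfold X. f_equal. apply fvs_fvs. }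
    rewrite E. f_equal; auto. rewrite IHM2. apply act_ext.
    intros w Hw. unfold upd at 1. destruct (veq_dec V w v).
    + subst. simpl. unfold upd. destruct (veq_dec V y y); [|congruence].
      destruct (veq_dec V v v); congruence.
    + unfold upd at 2. destruct (veq_dec V w v); [congruence|].
      apply act_ext. intros u Hu. unfold upd. destruct (veq_dec V u y); auto.
      subst. exfalso. apply Hy. apply in_fvs. exists w. split; auto. apply in_rem; auto.
  - f_equal; auto.
Qed.


Lemma upd_eq : forall (s : V -> tm) x N, upd s x N x = N.
Proof. intros; unfold upd; destruct (veq_dec V x x); congruence. Qed.
Lemma upd_neq : forall (s : V -> tm) x N w, w <> x -> upd s x N w = s w.
Proof. intros; unfold upd; destruct (veq_dec V w x); congruence. Qed.

Lemma act_io_act : forall (P : tm) s, act (act P io) s = act P s.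
Proof. intros; rewrite act_comp; apply act_ext; intros; reflexivity. Qed.

Lemma act_io_io : forall (P : tm), act (act P io) io = act P io.
Proof. intros; apply act_io_act. Qed.

Lemma SE_all : forall (P Q : tm) s, act P io = act Q io -> act P s = act Q s.
Proof. intros P Q s H. rewrite <- (act_io_act P), <- (act_io_act Q), H; auto. Qed.

Lemma fv_io : forall (P : tm), fv (act P io) = fv P.
Proof. intros; rewrite fv_act; apply fvs_io. Qed.

Lemma G1 : forall (M : tm) s x y N, ~ In y (fvs s (rem (fv M) x)) ->
  act (act M (upd s x (tv y))) (upd io y N) = act M (upd (fun w => act (s w) io) x N).
Proof.
  intros M s x y N Hy. rewrite act_comp. apply act_ext. intros w Hw.
  destruct (veq_dec V w x).
  - subst. rewrite !upd_eq. simpl. apply upd_eq.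
  - rewrite !upd_neq by auto. apply act_ext. intros u Hu.
    destruct (veq_dec V u y).
    + subst. exfalso. apply Hy. apply in_fvs. exists w. split; auto. apply in_rem; auto.
    + apply upd_neq; auto.
Qed.

Lemma G2 : forall (M : tm) s x y N, ~ In y (rem (fv M) x) ->
  act (act M (upd io x (tv y))) (upd s y N) = act M (upd s x N).
Proof.
  intros M s x y N Hy. rewrite act_comp. apply act_ext. intros w Hw.
  destruct (veq_dec V w x).
  - subst. rewrite !upd_eq. simpl. apply upd_eq.
  - rewrite !upd_neq by auto. simpl. apply upd_neq.
    intro; subst. apply Hy. apply in_rem; auto.
Qed.

Lemma rem_subst_var : forall (M : tm) x y, ~ In y (rem (fv M) x) ->
  rem (fv (subst1 M x (tv y))) y = rem (fv M) x.
Proof.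
  intros. unfold subst1. rewrite fv_act. rewrite rem_fvs_upd. apply fvs_io.
  rewrite fvs_io; auto.
Qed.

Lemma alpha_act : forall (M N : tm), alpha M N -> forall s, act M s = act N s.
Proof.
  induction 1; intros s; simpl; auto.
  - rewrite IHalpha1, IHalpha2; auto.
  - assert (E : rem (fv M) x = rem (fv M') x').
    { rewrite <- (rem_subst_var M x y), <- (rem_subst_var M' x' y) by auto. rewrite H2; auto. }
    rewrite E, IHalpha. f_equal.
    rewrite <- (G2 M s x y) by auto. rewrite <- (G2 M' s x' y) by auto.
    unfold subst1 in H2. rewrite H2; auto.
  - assert (E : rem (fv M) x = rem (fv M') x').
    { rewrite <- (rem_subst_var M x y), <- (rem_subst_var M' x' y) by auto. rewrite H2; auto. }
    rewrite E, IHalpha. f_equal.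
    rewrite <- (G2 M s x y) by auto. rewrite <- (G2 M' s x' y) by auto.
    unfold subst1 in H2. rewrite H2; auto.
Qed.

Lemma alpha_io : forall (M : tm), alpha M (act M io).
Proof.
  induction M; simpl.
  - constructor.
  - constructor.
  - set (y := X io (rem (fv M2) v)).
    assert (Hy : ~ In y (rem (fv M2) v)).
    { pose proof (X_fresh io (rem (fv M2) v)). rewrite fvs_io in H. exact H. }
    set (z := X' V (rem (fv M2) v)).
    assert (Hz : ~ In z (rem (fv M2) v)) by apply X'_fresh.
    apply alpha_lam with z; auto.
    + rewrite fv_act, rem_fvs_upd by (rewrite fvs_io; auto). rewrite fvs_io; auto.
    + unfold subst1. rewrite G1 by (rewrite fvs_io; auto). apply act_ext; intros w Hw.
      destruct (veq_dec V w v). subst; rewrite !upd_eq; auto. rewrite !upd_neq; auto.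
  - set (y := X io (rem (fv M2) v)).
    assert (Hy : ~ In y (rem (fv M2) v)).
    { pose proof (X_fresh io (rem (fv M2) v)). rewrite fvs_io in H. exact H. }
    set (z := X' V (rem (fv M2) v)).
    assert (Hz : ~ In z (rem (fv M2) v)) by apply X'_fresh.
    apply alpha_pi with z; auto.
    + rewrite fv_act, rem_fvs_upd by (rewrite fvs_io; auto). rewrite fvs_io; auto.
    + unfold subst1. rewrite G1 by (rewrite fvs_io; auto). apply act_ext; intros w Hw.
      destruct (veq_dec V w v). subst; rewrite !upd_eq; auto. rewrite !upd_neq; auto.
  - constructor; auto.
Qed.

Lemma conv_of_SE : forall (P Q : tm), act P io = act Q io -> beta_conv P Q.
Proof.
  intros P Q H. unfold beta_conv.
  apply rst_trans with (act P io). apply rst_step; left; apply alpha_io.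
  rewrite H. apply rst_sym. apply rst_step; left; apply alpha_io.
Qed.

Lemma conv_ctx : forall (f : tm -> tm),
  (forall P Q, act P io = act Q io -> act (f P) io = act (f Q) io) ->
  (forall P Q, beta_step P Q -> beta_step (f P) (f Q)) ->
  forall P Q, beta_conv P Q -> beta_conv (f P) (f Q).
Proof.
  intros f H1 H2 P Q H. induction H.
  - destruct H. apply conv_of_SE. apply H1. apply alpha_act; auto.
    apply rst_step; right; auto.
  - apply rst_refl.
  - apply rst_sym; auto.
  - eapply rst_trans; eauto.
Qed.

Lemma SE_lam_body : forall (y : V) (T P Q : tm), act P io = act Q io ->
  act (tlam y T P) io = act (tlam y T Q) io.
Proof.
  intros y T P Q H. assert (F : fv P = fv Q) by (rewrite <- fv_io, H; apply fv_io).
  simpl. rewrite F. f_equal. apply SE_all; auto.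
Qed.
Lemma SE_pi_body : forall (y : V) (T P Q : tm), act P io = act Q io ->
  act (tpi y T P) io = act (tpi y T Q) io.
Proof.
  intros y T P Q H. assert (F : fv P = fv Q) by (rewrite <- fv_io, H; apply fv_io).
  simpl. rewrite F. f_equal. apply SE_all; auto.
Qed.
Lemma SE_lam_dom : forall (y : V) (T T' P : tm), act T io = act T' io ->
  act (tlam y T P) io = act (tlam y T' P) io.
Proof. intros; simpl; rewrite H; auto. Qed.
Lemma SE_pi_dom : forall (y : V) (T T' P : tm), act T io = act T' io ->
  act (tpi y T P) io = act (tpi y T' P) io.
Proof. intros; simpl; rewrite H; auto. Qed.
Lemma SE_appl : forall (M N P : tm), act M io = act N io ->
  act (tapp M P) io = act (tapp N P) io.
Proof. intros; simpl; rewrite H; auto. Qed.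
Lemma SE_appr : forall (M N P : tm), act M io = act N io ->
  act (tapp P M) io = act (tapp P N) io.
Proof. intros; simpl; rewrite H; auto. Qed.

Lemma beta_fv : forall (M N : tm), beta_step M N -> incl (fv N) (fv M).
Proof.
  induction 1; simpl; intros a Ha.
  - destruct H. simpl. unfold subst1 in Ha. rewrite fv_act in Ha.
    apply in_fvs in Ha. destruct Ha as [w [Hw Ha]].
    destruct (veq_dec V w x).
    + subst. rewrite upd_eq in Ha. apply in_or_app; right; auto.
    + rewrite upd_neq in Ha by auto. simpl in Ha. destruct Ha as [<-|[]].
      apply in_or_app; left; apply in_or_app; right. apply in_rem; auto.
  - apply in_app_or in Ha. apply in_or_app. destruct Ha; auto. right.
    apply in_rem in H0. apply in_rem. intuition.
  - apply in_app_or in Ha. apply in_or_app. destruct Ha; auto. right.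
    apply in_rem in H0. apply in_rem. intuition.
  - apply in_app_or in Ha. apply in_or_app. destruct Ha; auto.
  - apply in_app_or in Ha. apply in_or_app. destruct Ha; auto.
  - apply in_app_or in Ha. apply in_or_app. destruct Ha; auto.
  - apply in_app_or in Ha. apply in_or_app. destruct Ha; auto.
Qed.

Lemma lam_rename_io : forall (M : tm) s x y y' (P : tm),
  ~ In y (fvs s (rem (fv M) x)) -> ~ In y' (fvs s (rem (fv M) x)) ->
  act (tlam y P (act M (upd s x (tv y)))) io = act (tlam y' P (act M (upd s x (tv y')))) io.
Proof.
  intros. simpl. rewrite !fv_act. rewrite !rem_fvs_upd by auto. f_equal.
  rewrite !G1; auto.
Qed.
Lemma pi_rename_io : forall (M : tm) s x y y' (P : tm),
  ~ In y (fvs s (rem (fv M) x)) -> ~ In y' (fvs s (rem (fv M) x)) ->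
  act (tpi y P (act M (upd s x (tv y)))) io = act (tpi y' P (act M (upd s x (tv y')))) io.
Proof.
  intros. simpl. rewrite !fv_act. rewrite !rem_fvs_upd by auto. f_equal.
  rewrite !G1; auto.
Qed.

Lemma fresh_sub : forall (M M' : tm) s x y, incl (fv M') (fv M) ->
  ~ In y (fvs s (rem (fv M) x)) -> ~ In y (fvs s (rem (fv M') x)).
Proof.
  intros M M' s x y Hi Hy H. apply Hy. apply in_fvs in H. destruct H as [w [Hw H]].
  apply in_fvs. exists w; split; auto. apply in_rem in Hw. apply in_rem. intuition.
Qed.

Lemma beta_act : forall (M N : tm), beta_step M N -> forall s, beta_conv (act M s) (act N s).
Proof.
  induction 1; intros s.
  - destruct H. simpl.
    set (y := X s (rem (fv M) x)).
    assert (Hy : ~ In y (fvs s (rem (fv M) x))) by apply X_fresh.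
    apply rst_trans with (subst1 (act M (upd s x (tv y))) y (act N s)).
    + apply rst_step; right; apply bs_contr; constructor.
    + apply conv_of_SE. unfold subst1. rewrite G1 by auto.
      rewrite !act_comp. apply act_ext. intros w Hw.
      destruct (veq_dec V w x).
      * subst. rewrite !upd_eq. first [apply act_comp | symmetry; apply act_comp | reflexivity].
      * rewrite !upd_neq by auto. simpl. apply act_io_io.
  - simpl. pose proof (beta_fv _ _ H) as Hi.
    set (y := X s (rem (fv M) x)). set (y' := X s (rem (fv M') x)).
    assert (Hy : ~ In y (fvs s (rem (fv M) x))) by apply X_fresh.
    assert (Hy' : ~ In y' (fvs s (rem (fv M') x))) by apply X_fresh.
    apply rst_trans with (tlam y (act A s) (act M' (upd s x (tv y)))).
    + apply (conv_ctx (fun Q => tlam y (act A s) Q)); auto.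
      * intros; apply SE_lam_body; auto.
      * intros; apply bs_lam_body; auto.
    + apply conv_of_SE. apply lam_rename_io; auto. eapply fresh_sub; eauto.
  - simpl. pose proof (beta_fv _ _ H) as Hi.
    set (y := X s (rem (fv M) x)). set (y' := X s (rem (fv M') x)).
    assert (Hy : ~ In y (fvs s (rem (fv M) x))) by apply X_fresh.
    assert (Hy' : ~ In y' (fvs s (rem (fv M') x))) by apply X_fresh.
    apply rst_trans with (tpi y (act A s) (act M' (upd s x (tv y)))).
    + apply (conv_ctx (fun Q => tpi y (act A s) Q)); auto.
      * intros; apply SE_pi_body; auto.
      * intros; apply bs_pi_body; auto.
    + apply conv_of_SE. apply pi_rename_io; auto. eapply fresh_sub; eauto.
  - simpl. apply (conv_ctx (fun Q => tlam _ Q _)); auto.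
    + intros; apply SE_lam_dom; auto.
    + intros; apply bs_lam_dom; auto.
  - simpl. apply (conv_ctx (fun Q => tpi _ Q _)); auto.
    + intros; apply SE_pi_dom; auto.
    + intros; apply bs_pi_dom; auto.
  - simpl. apply (conv_ctx (fun Q => tapp Q _)); auto.
    + intros; apply SE_appl; auto.
    + intros; apply bs_appl; auto.
  - simpl. apply (conv_ctx (fun Q => tapp _ Q)); auto.
    + intros; apply SE_appr; auto.
    + intros; apply bs_appr; auto.
Qed.

Lemma conv_act : forall (M N : tm), beta_conv M N -> forall s, beta_conv (act M s) (act N s).
Proof.
  intros M N H s. induction H.
  - destruct H. rewrite (alpha_act _ _ H). apply rst_refl. apply beta_act; auto.
  - apply rst_refl.
  - apply rst_sym; auto.
  - eapply rst_trans; eauto.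
Qed.

End S.
Arguments fvs {V C}. Arguments X_fresh {V C}.


Scheme typ_min := Minimality for typing Sort Prop with wf_min := Minimality for wf Sort Prop.

Section S2.
Variable V : VarType.
Variable C : Type.
Variable Ax : C -> C -> Prop.
Variable Rl : C -> C -> C -> Prop.
Notation tm := (term V C).
Notation io := (iota V C).
Notation rem := (remove_var V).
Notation ty := (typing Ax Rl).
Notation wfc := (wf Ax Rl).

Lemma typ_wf : forall G (M B : tm), ty G M B -> wfc G.
Proof. induction 1; auto. Qed.

Lemma incl_dom : forall (G D : context V C), incl G D -> incl (dom G) (dom D).
Proof. intros G D H a Ha. unfold dom in *. apply in_map_iff in Ha. destruct Ha as [[b T] [<- Hb]].
  apply in_map_iff. exists (b,T); split; auto. Qed.

Lemma weaken : forall G (M B : tm), ty G M B -> forall D, incl G D -> wfc D -> ty D M B.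
Proof.
  induction 1; intros D HI HD.
  - apply ty_sort; auto.
  - apply ty_var; auto.
  - apply ty_prod with (s1:=s1) (s2:=s2) (s3:=s3); auto. intros y Hy.
    assert (Hy' : ~ In y (dom G)) by (intro; apply Hy; eapply incl_dom; eauto).
    apply H2; auto. apply incl_cons. left; auto. apply incl_tl; auto.
    apply wf_cons with (s:=s1); auto.
  - apply ty_abs with (s1:=s1) (s2:=s2) (s3:=s3); auto.
    + intros z Hz.
      assert (Hz' : ~ In z (dom G)) by (intro; apply Hz; eapply incl_dom; eauto).
      apply H2; auto. apply incl_cons. left; auto. apply incl_tl; auto.
      apply wf_cons with (s:=s1); auto.
    + intros z Hz.
      assert (Hz' : ~ In z (dom G)) by (intro; apply Hz; eapply incl_dom; eauto).
      apply H4; auto. apply incl_cons. left; auto. apply incl_tl; auto.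
      apply wf_cons with (s:=s1); auto.
  - eapply ty_app; eauto.
  - eapply ty_conv; eauto.
Qed.

Lemma in_dom : forall (G : context V C) a T, In (a,T) G -> In a (dom G).
Proof. intros. unfold dom. apply in_map_iff. exists (a,T); auto. Qed.

Lemma fv_subst_var : forall (B : tm) x y a, In a (rem (fv B) x) -> In a (fv (subst1 B x (tv y))).
Proof.
  intros. unfold subst1. rewrite fv_act. apply in_fvs. apply in_rem in H. destruct H.
  exists a. split; auto. rewrite upd_neq by auto. simpl; auto.
Qed.

Lemma typ_fv : forall G (M B : tm), ty G M B -> incl (fv M) (dom G).
Proof.
  induction 1; simpl; intros a Ha.
  - destruct Ha.
  - destruct Ha as [<-|[]]. eapply in_dom; eauto.
  - apply in_app_or in Ha. destruct Ha; auto.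
    set (w := X' V (dom G ++ fv B)).
    assert (Hw : ~ In w (dom G ++ fv B)) by apply X'_fresh.
    assert (Hw1 : ~ In w (dom G)) by (intro; apply Hw; apply in_or_app; auto).
    pose proof (H2 w Hw1 a (fv_subst_var _ _ _ _ H3)). simpl in H4. destruct H4; auto.
    subst. exfalso. apply Hw. apply in_or_app; right. apply in_rem in H3; tauto.
  - apply in_app_or in Ha. destruct Ha; auto.
    set (w := X' V (dom G ++ fv M)).
    assert (Hw : ~ In w (dom G ++ fv M)) by apply X'_fresh.
    assert (Hw1 : ~ In w (dom G)) by (intro; apply Hw; apply in_or_app; auto).
    pose proof (H4 w Hw1 a (fv_subst_var _ _ _ _ H5)). simpl in H6. destruct H6; auto.
    subst. exfalso. apply Hw. apply in_or_app; right. apply in_rem in H5; tauto.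
  - apply in_app_or in Ha. destruct Ha; auto.
  - auto.
Qed.

Lemma wf_fv : forall G, wfc G -> forall a (T : tm), In (a,T) G -> incl (fv T) (dom G).
Proof.
  induction 1; simpl; intros a T HT. destruct HT.
  destruct HT as [E|E].
  - inversion E; subst. intros b Hb. right. eapply typ_fv; eauto.
  - intros b Hb. right. eapply IHwf; eauto.
Qed.

Definition ren (r : V -> V) : V -> tm := fun w => tv (r w).
Definition Rel (r : V -> V) (p p' : V * tm) :=
  fst p' = r (fst p) /\ act (snd p') io = act (snd p) (ren r).
Definition injon (r : V -> V) (l : list V) :=
  forall a b, In a l -> In b l -> r a = r b -> a = b.
Definition updv (r : V -> V) (w z : V) : V -> V :=
  fun v => if veq_dec V v w then z else r v.

Lemma act_ren_io : forall (M : tm) r, act (act M (ren r)) io = act M (ren r).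
Proof. intros; rewrite act_comp; apply act_ext; intros; reflexivity. Qed.

Lemma dom_rel : forall r G G', Forall2 (Rel r) G G' -> dom G' = map r (dom G).
Proof. induction 1; simpl; auto. destruct H. rewrite IHForall2, H. auto. Qed.

Lemma in_rel : forall r G G', Forall2 (Rel r) G G' -> forall a (T : tm), In (a,T) G ->
  exists T', In (r a, T') G' /\ act T' io = act T (ren r).
Proof.
  induction 1; simpl; intros a T HT. destruct HT.
  destruct HT as [E|E].
  - subst x. destruct H as [H1 H2]. destruct y as [b T']. simpl in *. subst b.
    exists T'; auto.
  - destruct (IHForall2 a T E) as [T' [H1 H2]]. exists T'; auto.
Qed.

Lemma rel_ext : forall r G G' w z, Forall2 (Rel r) G G' -> ~ In w (dom G) ->
  (forall p, In p G -> ~ In w (fv (snd p))) -> Forall2 (Rel (updv r w z)) G G'.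
Proof.
  induction 1; intros Hw Hf; constructor.
  - destruct H as [H1 H2]. split.
    + rewrite H1. unfold updv. destruct (veq_dec V (fst x) w); auto.
      exfalso; apply Hw; left; auto.
    + rewrite H2. apply act_ext. intros v Hv. unfold ren, updv.
      destruct (veq_dec V v w); auto. subst. exfalso; eapply Hf; [left; eauto| auto].
  - apply IHForall2. intro; apply Hw; right; auto. intros; apply Hf; right; auto.
Qed.

Lemma ext_ctx : forall r G G' z (A'' A1 : tm) w,
  Forall2 (Rel r) G G' -> injon r (dom G) -> ~ In z (dom G') ->
  act A'' io = act A1 (ren r) -> ~ In w (dom G) -> ~ In w (fv A1) ->
  (forall p, In p G -> ~ In w (fv (snd p))) ->
  Forall2 (Rel (updv r w z)) ((w,A1)::G) ((z,A'')::G') /\ injon (updv r w z) (w :: dom G).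
Proof.
  intros r G G' z A'' A1 w HF HI Hz HA Hw1 Hw2 Hw3. split.
  - constructor.
    + split; simpl. unfold updv; destruct (veq_dec V w w); congruence.
      rewrite HA. apply act_ext. intros v Hv. unfold ren, updv.
      destruct (veq_dec V v w); subst; auto. contradiction.
    + apply rel_ext; auto.
  - rewrite (dom_rel _ _ _ HF) in Hz.
    intros a b Ha Hb E. unfold updv in E.
    destruct (veq_dec V a w) as [Ea|Ea]; destruct (veq_dec V b w) as [Eb|Eb].
    + congruence.
    + exfalso. apply Hz. rewrite E. apply in_map. destruct Hb; [congruence| auto].
    + exfalso. apply Hz. rewrite <- E. apply in_map. destruct Ha; [congruence| auto].
    + apply HI; auto. destruct Ha; [congruence|auto]. destruct Hb; [congruence|auto].
Qed.

Lemma K1 : forall (B : tm) u r w z, ~ In w (fv B) ->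
  act (subst1 B u (tv w)) (ren (updv r w z)) = act B (upd (ren r) u (tv z)).
Proof.
  intros. unfold subst1. rewrite act_comp. apply act_ext. intros v Hv.
  destruct (veq_dec V v u).
  - subst. rewrite !upd_eq. simpl. unfold ren, updv. destruct (veq_dec V w w); congruence.
  - rewrite !upd_neq by auto. simpl. unfold ren, updv. destruct (veq_dec V v w); auto.
    subst; contradiction.
Qed.

Lemma K2 : forall (B : tm) u y z, ~ In y (rem (fv B) u) ->
  act (subst1 B u (tv z)) io = act (act B (upd io u (tv y))) (upd io y (tv z)).
Proof.
  intros. rewrite G1. unfold subst1. rewrite act_comp. apply act_ext. intros v Hv.
  destruct (veq_dec V v u). subst; rewrite !upd_eq; auto. rewrite !upd_neq; auto.
  rewrite fvs_io; auto.
Qed.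

Lemma K3 : forall (B : tm) u r y z, ~ In y (fvs (ren r) (rem (fv B) u)) ->
  act (act B (upd (ren r) u (tv y))) (upd io y (tv z)) = act B (upd (ren r) u (tv z)).
Proof.
  intros. rewrite G1 by auto. apply act_ext. intros v Hv.
  destruct (veq_dec V v u). subst; rewrite !upd_eq; auto. rewrite !upd_neq; auto.
Qed.

Lemma Xio_fresh : forall (B : tm) u, ~ In (X io (rem (fv B) u)) (rem (fv B) u).
Proof. intros. pose proof (X_fresh io (rem (fv B) u)). rewrite fvs_io in H. auto. Qed.

End S2.
Arguments ren {V C}. Arguments Rel {V C}. Arguments injon {V}. Arguments updv {V}.
Arguments in_rel {V C}. Arguments dom_rel {V C}. Arguments ext_ctx {V C}.
Arguments K1 {V C}. Arguments K2 {V C}. Arguments K3 {V C}. Arguments Xio_fresh {V C}.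


Section S3.
Variable V : VarType.
Variable C : Type.
Variable Ax : C -> C -> Prop.
Variable Rl : C -> C -> C -> Prop.
Notation tm := (term V C).
Notation io := (iota V C).
Notation rem := (remove_var V).
Notation ty := (typing Ax Rl).
Notation wfc := (wf Ax Rl).

Definition P_typ (G : context V C) (M B : tm) := forall r G', Forall2 (Rel r) G G' -> injon r (dom G) ->
  forall M', act M' io = act M (ren r) -> ty G' M' (act B (ren r)).
Definition P_wf (G : context V C) := forall r G', Forall2 (Rel r) G G' -> injon r (dom G) ->
  wfc G' /\ forall a (T : tm), In (a,T) G -> exists s, ty G' (act T (ren r)) (tc s).

Lemma act_tv_io : forall (M : tm) s, (forall w, exists v, s w = tv v) -> act (act M s) io = act M s.
Proof.
  intros. rewrite act_comp. apply act_ext. intros w _. destruct (H w) as [v E]. rewrite E. reflexivity.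
Qed.

Lemma upd_ren_tv : forall r (y z : V), forall w, exists v, upd (ren r) y (tv z) w = @tv V C v.
Proof. intros. unfold upd, ren. destruct (veq_dec V w y); eauto. Qed.

Lemma fresh_facts : forall (G : context V C) (l : list V),
  let w := X' V (dom G ++ l ++ flat_map (fun p => fv (snd p)) G) in
  ~ In w (dom G) /\ ~ In w l /\ (forall p, In p G -> ~ In w (fv (snd p))).
Proof.
  intros G l w. pose proof (X'_fresh V (dom G ++ l ++ flat_map (fun p => fv (snd p)) G)) as H.
  fold w in H. repeat split.
  - intro; apply H; rewrite !in_app_iff; auto.
  - intro; apply H; rewrite !in_app_iff; auto.
  - intros p Hp Hin; apply H; rewrite !in_app_iff; right; right. apply in_flat_map; eauto.
Qed.

Lemma main_ren : forall G (M B : tm), ty G M B -> P_typ G M B.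
Proof.
  apply (typ_min V C Ax Rl P_typ P_wf); unfold P_typ, P_wf.
  -
    intros G s1 s2 HG IHG Hax r G' HF HI M' HM.
    destruct M'; simpl in HM; try discriminate. injection HM as ->.
    simpl. apply ty_sort; auto. apply (IHG r G' HF HI).
  -
    intros G x A HG IHG Hin r G' HF HI M' HM.
    destruct M'; simpl in HM; try discriminate. unfold iota in HM. injection HM as ->.
    destruct (in_rel _ _ _ HF _ _ Hin) as [T' [HT' HTe]].
    destruct (IHG r G' HF HI) as [HwG Hent].
    destruct (Hent x A Hin) as [s Hs].
    apply ty_conv with (A := T') (s := s); auto.
    + apply ty_var; auto.
    + apply conv_of_SE. rewrite HTe, act_ren_io. auto.
  -
    intros G x A B s1 s2 s3 HR HA IHA HB IHB r G' HF HI M' HM.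
    destruct M' as [| |? ? ?| u' A' B' |]; simpl in HM; try discriminate.
    injection HM as Hn HA' HB'.
    simpl. apply ty_prod with (s1 := s1) (s2 := s2) (s3 := s3).
    { exact HR. } { exact (IHA r G' HF HI A' HA'). }
    intros z Hz.
    destruct (fresh_facts G (fv A ++ fv B)) as [Hw1 [Hw2 Hw3]].
    set (w := X' V (dom G ++ (fv A ++ fv B) ++ flat_map (fun p => fv (snd p)) G)) in *.
    assert (HwA : ~ In w (fv A)) by (intro; apply Hw2; apply in_or_app; auto).
    assert (HwB : ~ In w (fv B)) by (intro; apply Hw2; apply in_or_app; auto).
    destruct (ext_ctx r G G' z A' A w HF HI Hz HA' Hw1 HwA Hw3) as [HF' HI'].
    apply (IHB w Hw1 (updv r w z) _ HF' HI').
    rewrite K1 by auto. rewrite (K2 _ _ _ _ (Xio_fresh B' u')).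
    rewrite HB', Hn. apply K3. apply X_fresh.
  -
    intros G x y A M B s1 s2 s3 HR HA IHA HB IHB HM IHM r G' HF HI M' HM'.
    destruct M' as [| | u' A' M1' | |]; simpl in HM'; try discriminate.
    injection HM' as Hn HA' HM1'.
    simpl.
    set (yh := X (ren r) (rem (fv B) y)).
    assert (Hyh : ~ In yh (fvs (ren r) (rem (fv B) y))) by apply X_fresh.
    set (B0 := act B (upd (ren r) y (tv yh))).
    assert (HB0 : forall z, subst1 B0 yh (tv z) = act B (upd (ren r) y (tv z))).
    { intros z. unfold B0, subst1. apply K3; auto. }
    assert (Hbody : forall A'', act A'' io = act A (ren r) ->
      forall z, ~ In z (dom G') -> ty ((z, A'') :: G') (subst1 B0 yh (tv z)) (tc s2)).
    { intros A'' HA'' z Hz.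
      destruct (fresh_facts G (fv A ++ fv B)) as [Hw1 [Hw2 Hw3]].
      set (w := X' V (dom G ++ (fv A ++ fv B) ++ flat_map (fun p => fv (snd p)) G)) in *.
      assert (HwA : ~ In w (fv A)) by (intro; apply Hw2; apply in_or_app; auto).
      assert (HwB : ~ In w (fv B)) by (intro; apply Hw2; apply in_or_app; auto).
      destruct (ext_ctx r G G' z A'' A w HF HI Hz HA'' Hw1 HwA Hw3) as [HF' HI'].
      apply (IHB w Hw1 (updv r w z) _ HF' HI').
      rewrite K1 by auto. rewrite HB0. apply act_tv_io. apply upd_ren_tv. }
    apply ty_conv with (A := tpi yh A' B0) (s := s3).
    + apply ty_abs with (s1 := s1) (s2 := s2) (s3 := s3).
      { exact HR. } { exact (IHA r G' HF HI A' HA'). } { apply Hbody; auto. }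
      intros z Hz.
      destruct (fresh_facts G (fv A ++ fv B ++ fv M)) as [Hw1 [Hw2 Hw3]].
      set (w := X' V (dom G ++ (fv A ++ fv B ++ fv M) ++ flat_map (fun p => fv (snd p)) G)) in *.
      assert (HwA : ~ In w (fv A)) by (intro; apply Hw2; rewrite !in_app_iff; auto).
      assert (HwB : ~ In w (fv B)) by (intro; apply Hw2; rewrite !in_app_iff; auto).
      assert (HwM : ~ In w (fv M)) by (intro; apply Hw2; rewrite !in_app_iff; auto).
      destruct (ext_ctx r G G' z A' A w HF HI Hz HA' Hw1 HwA Hw3) as [HF' HI'].
      rewrite HB0. rewrite <- (K1 B y r w z HwB).
      apply (IHM w Hw1 (updv r w z) _ HF' HI').
      rewrite K1 by auto. rewrite (K2 _ _ _ _ (Xio_fresh M1' u')).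
      rewrite HM1', Hn. apply K3. apply X_fresh.
    + apply conv_of_SE. apply SE_pi_dom. rewrite HA'. symmetry. apply act_ren_io.
    + apply ty_prod with (s1 := s1) (s2 := s2) (s3 := s3).
      * exact HR.
      * apply (IHA r G' HF HI). apply act_ren_io.
      * apply Hbody. apply act_ren_io.
  -
    intros G M N x A B s HM IHM HN IHN HB IHB r G' HF HI M' HM'.
    destruct M' as [| | | | M1' N1']; simpl in HM'; try discriminate.
    injection HM' as HM1 HN1.
    set (xh := X (@ren V C r) (rem (fv B) x)).
    assert (Hxh : ~ In xh (fvs (ren r) (rem (fv B) x))) by apply X_fresh.
    set (B0 := act B (upd (ren r) x (tv xh))).
    assert (Heq : act (subst1 B0 xh N1') io = act (subst1 B x N) (ren r)).
    { unfold B0, subst1 at 1. rewrite G1 by auto. unfold subst1. rewrite !act_comp.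
      apply act_ext. intros w Hw. destruct (veq_dec V w x).
      - subst. rewrite !upd_eq. auto.
      - rewrite !upd_neq by auto. reflexivity. }
    apply ty_conv with (A := subst1 B0 xh N1') (s := s).
    + apply ty_app with (A := act A (ren r)) (s := s).
      * exact (IHM r G' HF HI M1' HM1).
      * exact (IHN r G' HF HI N1' HN1).
      * exact (IHB r G' HF HI _ Heq).
    + apply conv_of_SE. rewrite Heq. symmetry. apply act_ren_io.
    + apply (IHB r G' HF HI). apply act_ren_io.
  -
    intros G M A B s HM IHM Hc HB IHB r G' HF HI M' HM'.
    apply ty_conv with (A := act A (ren r)) (s := s).
    + apply IHM; auto.
    + apply conv_act; auto.
    + apply (IHB r G' HF HI). apply act_ren_io.
  -
    intros r G' HF HI. inversion HF; subst. split. constructor. intros a T [].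
  -
    intros G x A s HG IHG HA IHA Hx r G' HF HI.
    inversion HF as [|p p' ? G'' Hrel HF']; subst. destruct p' as [x' A'].
    destruct Hrel as [E1 E2]; simpl in E1, E2.
    assert (HI' : injon r (dom G)) by (intros a b Ha Hb; apply HI; right; auto).
    destruct (IHG r G'' HF' HI') as [HwG Hent].
    assert (HA' : ty G'' A' (tc s)) by exact (IHA r G'' HF' HI' A' E2).
    assert (Hwf : wfc ((x', A') :: G'')).
    { apply wf_cons with (s := s); auto.
      rewrite (dom_rel _ _ _ HF'). subst x'. intro Hin. apply in_map_iff in Hin.
      destruct Hin as [b [Eb Hb]]. assert (b = x) by (apply HI; simpl; auto). subst; auto. }
    split; auto.
    intros a T [E|E].
    + injection E as <- <-. exists s. eapply weaken; eauto.
      * exact (IHA r G'' HF' HI' _ (act_ren_io _ _ _ _)).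
      * apply incl_tl, incl_refl.
    + destruct (Hent a T E) as [s' Hs']. exists s'. eapply weaken; eauto.
      apply incl_tl, incl_refl.
Qed.

End S3.

Theorem mainTheorem18 (V : VarType) (C : Type)
  (Ax : C -> C -> Prop) (Rl : C -> C -> C -> Prop)
  (G : context V C) (x y : V) (A M B : term V C) :
  ~ In y (dom G) ->
  typing Ax Rl ((x, A) :: G) M B ->
  typing Ax Rl ((y, A) :: G) (subst1 M x (tv y)) (subst1 B x (tv y)).
Proof.
  intros Hy HT.
  pose proof (typ_wf _ _ _ _ _ _ _ HT) as Hwf.
  inversion Hwf as [|G0 x0 A0 s HG HA Hx]; subst.
  set (r := fun w => if veq_dec V w x then y else w).
  assert (Hr : forall a, In a (dom G) -> r a = a).
  { intros a Ha. unfold r. destruct (veq_dec V a x); auto. subst; contradiction. }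
  assert (HFG : Forall2 (Rel r) G G).
  { assert (forall Gs, incl Gs G -> Forall2 (Rel r) Gs Gs).
    { induction Gs; intros Hi; constructor.
      - destruct a as [a T]. split; simpl.
        + symmetry; apply Hr. eapply in_dom. apply Hi; left; eauto.
        + apply act_ext. intros w Hw. unfold ren. rewrite Hr; auto.
          eapply wf_fv; eauto. apply Hi; left; eauto.
      - apply IHGs. intros p Hp; apply Hi; right; auto. }
    apply H, incl_refl. }
  assert (HF : Forall2 (Rel r) ((x,A)::G) ((y,A)::G)).
  { constructor; auto. split; simpl.
    - unfold r. destruct (veq_dec V x x); congruence.
    - apply act_ext. intros w Hw. unfold ren. rewrite Hr; auto. eapply typ_fv; eauto. }
  assert (HI : injon r (dom ((x,A)::G))).
  { intros a b Ha Hb E. simpl in Ha, Hb. unfold r in E.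
    destruct (veq_dec V a x) as [Ea|Ea]; destruct (veq_dec V b x) as [Eb|Eb].
    - congruence.
    - destruct Hb as [Hb|Hb]; [congruence|]. subst. contradiction.
    - destruct Ha as [Ha|Ha]; [congruence|]. subst. contradiction.
    - destruct Ha as [Ha|Ha]; [congruence|]. auto. }
  assert (Hs : forall w, upd (iota V C) x (tv y) w = ren r w).
  { intros w. unfold upd, ren, r. destruct (veq_dec V w x); auto. }
  assert (E : forall T : term V C, subst1 T x (tv y) = act T (ren r)).
  { intros T. unfold subst1. apply act_ext. intros; auto. }
  rewrite !E.
  apply (main_ren _ _ _ _ _ _ _ HT r _ HF HI).
  apply act_ren_io.
Qed.
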